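(* Let ${\bf Q}$ be an orthogonal projection on ${\cal H}$, let $s_1,s_2,s_3\in\mathbb{C}$ with $s_1^2+s_2^2+s_3^2=1$ and $s_1\ne0$, let $z\in\mathbb{C}\setminus\{0\}$, and put $\underline z=s_1^2z+s_2^2$, assumed nonzero. On ${\cal H}^3$ let $\underline{\bf Q}$ have block entries $\underline{\bf Q}_{ij}=s_is_j{\bf Q}$ and let $\underline\Gamma=\mathrm{diag}(\Gamma,{\bf I},0)$. Let ${\bf E},{\bf h}\in{\cal H}$ with $\Gamma{\bf E}={\bf E}$, $\Gamma{\bf h}={\bf h}$. Then $$({\bf I}-\Gamma{\bf Q}/z){\bf E}={\bf h}$$ holds if and only if there exists ${\bf E}_1\in{\cal H}$ such that $\underline{\bf E}=({\bf E},{\bf E}_1,0)$ satisfies $$\underline\Gamma({\bf I}-\underline{\bf Q}/\underline z)\underline{\bf E}=({\bf h},0,0);$$ in that case necessarily ${\bf E}_1=s_2{\bf Q}{\bf E}/(s_1z)$. In particular, whenever the corresponding inverses exist on the ranges of $\Gamma$ and $\underline\Gamma$, $[{\bf I}-\Gamma{\bf Q}/z]^{-1}{\bf h}=\underline{\bf G}^\dagger[{\bf I}-\underline\Gamma\underline{\bf Q}/\underline z]^{-1}\underline{\bf G}{\bf h}$, where $\underline{\bf G}{\bf h}=({\bf h},0,0)$ and $\underline{\bf G}^\dagger({\bf a},{\bf b},{\bf c})={\bf a}$.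
   Context: ${\cal H}$ is a complex Hilbert space and $\Gamma$ is an orthogonal projection on ${\cal H}$. ${\cal H}^3$ carries the direct-sum Hilbert structure. *)

(* Defs.v *)
From HB Require Import structures.
From mathcomp Require Import all_boot all_order all_algebra.
From mathcomp Require Import complex.
From mathcomp Require Import reals.
Set Implicit Arguments. Unset Strict Implicit. Unset Printing Implicit Defensive.
Import Order.TTheory GRing.Theory Num.Theory.
Local Open Scope ring_scope.

Definition is_inner_product (R : realType) (V : lmodType R[i])
  (ip : V -> V -> R[i]) : Prop :=
  [/\ (forall (a : R[i]) (x y w : V), ip (a *: x + y) w = a * ip x w + ip y w),
      (forall x y : V, ip y x = Num.conj (ip x y)),
      (forall x : V, 0 <= ip x x) &
      (forall x : V, ip x x = 0 -> x = 0)].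

Definition sqnorm (R : realType) (V : lmodType R[i]) (ip : V -> V -> R[i])
  (x : V) : R := complex.Re (ip x x).

Definition ip_complete (R : realType) (V : lmodType R[i])
  (ip : V -> V -> R[i]) : Prop :=
  forall u : nat -> V,
    (forall e : R, 0 < e -> exists N : nat, forall m n : nat,
        (N <= m)%N -> (N <= n)%N -> sqnorm ip (u m - u n) < e) ->
    exists l : V, forall e : R, 0 < e -> exists N : nat, forall n : nat,
        (N <= n)%N -> sqnorm ip (u n - l) < e.

Definition is_hilbert (R : realType) (V : lmodType R[i])
  (ip : V -> V -> R[i]) : Prop := is_inner_product ip /\ ip_complete ip.

Definition orth_proj (R : realType) (V : lmodType R[i])
  (ip : V -> V -> R[i]) (P : {linear V -> V}) : Prop :=
  (forall x, P (P x) = P x) /\ (forall x y, ip (P x) y = ip x (P y)).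

Definition blockQ (R : realType) (V : lmodType R[i]) (Q : V -> V)
  (s1 s2 s3 : R[i]) (x : V * V * V) : V * V * V :=
  let: (a, b, c) := x in
  ( s1 * s1 *: Q a + s1 * s2 *: Q b + s1 * s3 *: Q c,
    s2 * s1 *: Q a + s2 * s2 *: Q b + s2 * s3 *: Q c,
    s3 * s1 *: Q a + s3 * s2 *: Q b + s3 * s3 *: Q c).

Definition blockGamma (R : realType) (V : lmodType R[i]) (G : V -> V)
  (x : V * V * V) : V * V * V :=
  let: (a, b, c) := x in (G a, b, 0).

Definition embG (R : realType) (V : lmodType R[i]) (h : V) : V * V * V :=
  (h, 0, 0).
Definition embGdag (R : realType) (V : lmodType R[i]) (x : V * V * V) : V :=
  x.1.1.

(* Main.v *)
Require Import Defs.
From HB Require Import structures.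
From mathcomp Require Import all_boot all_order all_algebra.
From mathcomp Require Import complex.
From mathcomp Require Import reals.
From mathcomp Require Import ring.
Import Order.TTheory GRing.Theory Num.Theory.
Local Open Scope ring_scope.

Lemma solve_lin (F : fieldType) (W : lmodType F) (u v : W) (a b : F) :
  1 - b != 0 -> u = a *: v + b *: u -> u = ((1 - b)^-1 * a) *: v.
Proof.
move=> nz e.
have h : (1 - b) *: u = a *: v by rewrite scalerBl scale1r {1}e addrK.
by rewrite -scalerA -h scalerA mulVf // scale1r.
Qed.

Theorem mainTheorem11 (R : realType) (V : lmodType R[i]) (ip : V -> V -> R[i])
  (Gam Q : {linear V -> V}) (s1 s2 s3 z : R[i]) :
  is_hilbert ip -> orth_proj ip Gam -> orth_proj ip Q ->
  s1 ^+ 2 + s2 ^+ 2 + s3 ^+ 2 = 1 -> s1 != 0 -> z != 0 ->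
  s1 ^+ 2 * z + s2 ^+ 2 != 0 ->
  let zu := s1 ^+ 2 * z + s2 ^+ 2 in
  let A := fun x : V => x - z^-1 *: Gam (Q x) in
  let Au := fun x : V * V * V =>
    blockGamma Gam (x - zu^-1 *: blockQ Q s1 s2 s3 x) in
  let Bu := fun x : V * V * V =>
    x - zu^-1 *: blockGamma Gam (blockQ Q s1 s2 s3 x) in
  (forall E h : V, Gam E = E -> Gam h = h ->
     (A E = h <-> exists E1 : V, Au (E, E1, 0) = (h, 0, 0))) /\
  (forall E h E1 : V, Gam E = E -> Gam h = h ->
     Au (E, E1, 0) = (h, 0, 0) -> E1 = (s1 * z)^-1 *: (s2 *: Q E)) /\
  (forall (Ainv : V -> V) (Buinv : V * V * V -> V * V * V),
     (forall h, Gam h = h -> Gam (Ainv h) = Ainv h /\ A (Ainv h) = h) ->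
     (forall x, Gam x = x -> Ainv (A x) = x) ->
     (forall y, blockGamma Gam y = y ->
        blockGamma Gam (Buinv y) = Buinv y /\ Bu (Buinv y) = y) ->
     (forall x, blockGamma Gam x = x -> Buinv (Bu x) = x) ->
     forall h, Gam h = h -> Ainv h = embGdag (Buinv (embG h))).
Proof.
move=> _ [GG _] [QQ _] _ s1nz znz zunz zu A Au Bu.
set c := (s1 * z)^-1 * s2.
have AuE : forall E E1, Au (E, E1, 0) =
  (Gam (E - zu^-1 *: ((s1 * s1) *: Q E + (s1 * s2) *: Q E1)),
   E1 - zu^-1 *: ((s2 * s1) *: Q E + (s2 * s2) *: Q E1), 0).
  by move=> E E1; rewrite /Au /blockGamma /blockQ /= ?linear0 ?scaler0 ?addr0 ?subr0.
have BuE : forall E E1, Gam E = E -> Bu (E, E1, 0) = Au (E, E1, 0).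
  move=> E E1 hE; rewrite AuE /Bu /blockGamma /blockQ /=.
  have -> : forall (a b d a' b' d' : V) (k : R[i]),
    (a, b, d) - k *: (a', b', d') = (a - k *: a', b - k *: b', d - k *: d') by [].
  rewrite !(raddf0 Q) !scaler0 !addr0 subr0; congr (_, _, _); symmetry; by rewrite linearB linearZ hE.
have id1 : s1 * s1 + s1 * s2 * c = zu / z.
  rewrite /c /zu; field; by rewrite s1nz znz.
have id2 : c = zu^-1 * (s2 * s1 + s2 * s2 * c).
  rewrite /c /zu; field; by rewrite s1nz znz zunz.
have L1 : forall E E1, E1 - zu^-1 *: ((s2 * s1) *: Q E + (s2 * s2) *: Q E1) = 0 ->
   E1 = c *: Q E.
  move=> E E1 /eqP; rewrite subr_eq0 => /eqP e.
  have eQ : Q E1 = (zu^-1 * (s2 * s1)) *: Q E + (zu^-1 * (s2 * s2)) *: Q E1.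
    by rewrite {1}e !linearZ linearD !linearZ /= !QQ scalerDr !scalerA.
  have nz : 1 - zu^-1 * (s2 * s2) != 0.
    have -> : 1 - zu^-1 * (s2 * s2) = zu^-1 * (s1 ^+ 2 * z).
      rewrite /zu; field; by rewrite zunz.
    by rewrite mulf_neq0 ?invr_eq0 ?mulf_neq0 ?expf_neq0.
  have qE1 := @solve_lin _ _ _ _ _ _ nz eQ.
  have hc : (1 - zu^-1 * (s2 * s2))^-1 * (zu^-1 * (s2 * s1)) = c.
    rewrite /c /zu; field; rewrite ?s1nz ?znz ?zunz /=.
    have -> : s1 ^+ 2 * z + s2 ^+ 2 - s2 * s2 = s1 ^+ 2 * z by ring.
    by rewrite mulf_neq0 ?expf_neq0.
  rewrite hc in qE1.
  by rewrite e qE1 scalerA -scalerDl scalerA -id2.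
have L2 : forall E, zu^-1 *: ((s1 * s1) *: Q E + (s1 * s2) *: Q (c *: Q E)) = z^-1 *: Q E
   /\ c *: Q E - zu^-1 *: ((s2 * s1) *: Q E + (s2 * s2) *: Q (c *: Q E)) = 0.
  move=> E; rewrite linearZ /= QQ !scalerA -!scalerDl !scalerA id1; split.
    congr (_ *: _); rewrite /zu; field; by rewrite znz zunz.
  by rewrite -id2 subrr.
have part1 : forall E h : V, Gam E = E -> Gam h = h ->
     (A E = h <-> exists E1 : V, Au (E, E1, 0) = (h, 0, 0)).
  move=> E h hE hh; split.
    move=> <-; exists (c *: Q E); rewrite AuE.
    have [l1 l2] := L2 E.
    by rewrite l1 l2 linearB linearZ hE.
  move=> [E1]; rewrite AuE => [[e1 e2]].
  have E1e := L1 _ _ e2; rewrite E1e in e1.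
  have [l1 _] := L2 E; rewrite l1 linearB linearZ hE in e1.
  by rewrite -e1.
split => //; split.
  move=> E h E1 hE hh; rewrite AuE => [[_ e2]].
  by rewrite (L1 _ _ e2) scalerA.
move=> Ainv Buinv hA _ _ hB h hh.
have [gE aE] := hA h hh.
set E := Ainv h in gE aE *.
have [E1 hE1] := (part1 E h gE hh).1 aE.
have bg : blockGamma Gam (E, E1, 0) = (E, E1, 0) by rewrite /blockGamma gE.
have := hB _ bg; rewrite BuE // hE1 /embG => ->.
by [].
Qed.
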